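(* Let $h,b>0$, $\rho=b/(h+b)$ and $0<\alpha\le\min\{1/2,2\rho,2(1-\rho)\}$. Let $\Theta=[-\alpha/20,\alpha/20]$ and for $\theta\in\Theta$ set $l_1(\theta)=\frac{4\rho-\alpha}{16-8\alpha}+\theta$, $l_2(\theta)=l_1(\theta)+\rho/2$, $r_2(\theta)=l_2(\theta)+1/4$, $r_1(\theta)=r_2(\theta)+(1-\rho)/2$, $w_1=2\pi/\rho$, $w_2=2\pi/(1-\rho)$. Define the density $f(x|\theta)=0$ for $x\notin[0,1]$ and, for $x\in[0,1]$: $f(x|\theta)=2-\alpha$ on $[0,l_1(\theta)]\cup[r_1(\theta),1]$; $f(x|\theta)=\alpha$ on $(l_2(\theta),r_2(\theta)]$; $f(x|\theta)=\alpha+(1-\alpha)(\cos(w_1(x-l_1(\theta)))+1)$ on $[l_1(\theta),l_2(\theta)]$; $f(x|\theta)=\alpha+(1-\alpha)(\cos(w_2(r_1(\theta)-x))+1)$ on $[r_2(\theta),r_1(\theta)]$. Let $x_\theta^*$ be the minimizer of $C_\theta(x)=\mathbb{E}_{X\sim f(\cdot|\theta)}[h(x-X)^++b(X-x)^+]$. Then for every $\theta\in\Theta$, $x_\theta^*\in[l_2(\theta),r_2(\theta)]$ and $$x_\theta^*=\frac{\rho}{2}+\frac{4\rho-\alpha}{16-8\alpha}+\frac18-\left(\frac2\alpha-2\right)\theta.$$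
   Context: For linear overage cost $h$ and underage cost $b$, the minimizer of the expected cost is the $\rho$-quantile of the demand distribution. *)

(* Defs.v *)
From Stdlib Require Import Reals.
From Coquelicot Require Import Coquelicot.
Open Scope R_scope.

Definition rho (h b : R) : R := b / (h + b).

Definition l1 (h b alpha theta : R) : R :=
  (4 * rho h b - alpha) / (16 - 8 * alpha) + theta.
Definition l2 (h b alpha theta : R) : R := l1 h b alpha theta + rho h b / 2.
Definition r2 (h b alpha theta : R) : R := l2 h b alpha theta + 1 / 4.
Definition r1 (h b alpha theta : R) : R := r2 h b alpha theta + (1 - rho h b) / 2.
Definition w1 (h b : R) : R := 2 * PI / rho h b.
Definition w2 (h b : R) : R := 2 * PI / (1 - rho h b).

(* The density f(x | theta). On the (measure-zero) boundary points the
   pieces agree, so the order of the tests is immaterial. *)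
Definition dens (h b alpha theta x : R) : R :=
  if Rlt_dec x 0 then 0
  else if Rlt_dec 1 x then 0
  else if Rle_dec x (l1 h b alpha theta) then 2 - alpha
  else if Rle_dec x (l2 h b alpha theta) then
    alpha + (1 - alpha) * (cos (w1 h b * (x - l1 h b alpha theta)) + 1)
  else if Rle_dec x (r2 h b alpha theta) then alpha
  else if Rle_dec x (r1 h b alpha theta) then
    alpha + (1 - alpha) * (cos (w2 h b * (r1 h b alpha theta - x)) + 1)
  else 2 - alpha.

(* C_theta(x) = E_{X ~ f(.|theta)} [ h (x - X)^+ + b (X - x)^+ ].
   Since f vanishes outside [0,1], the expectation is the integral over [0,1]. *)
Definition cost (h b alpha theta x : R) : R :=
  RInt (fun t => dens h b alpha theta t *
                 (h * Rmax (x - t) 0 + b * Rmax (t - x) 0)) 0 1.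

(* Main.v *)
Require Import Defs.
From Stdlib Require Import Reals Lra.
From Coquelicot Require Import Coquelicot.
Open Scope R_scope.

Lemma c_plus (f g : R -> R) x : continuous f x -> continuous g x -> continuous (fun t => f t + g t) x.
Proof. intros; exact (continuous_plus f g x H H0). Qed.
Lemma c_mult (f g : R -> R) x : continuous f x -> continuous g x -> continuous (fun t => f t * g t) x.
Proof. intros; exact (continuous_mult f g x H H0). Qed.
Lemma c_opp (f : R -> R) x : continuous f x -> continuous (fun t => - f t) x.
Proof. intros; exact (continuous_opp f x H). Qed.
Lemma c_minus (f g : R -> R) x : continuous f x -> continuous g x -> continuous (fun t => f t - g t) x.
Proof. intros; apply c_plus; auto; apply c_opp; auto. Qed.
Lemma c_max (f g : R -> R) x : continuous f x -> continuous g x -> continuous (fun t => Rmax (f t) (g t)) x.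
Proof.
  intros Hf Hg.
  apply continuous_ext with (fun t => (f t + g t + Rabs (f t - g t)) * / 2).
  { intros t; unfold Rmax, Rabs; destruct Rle_dec; destruct Rcase_abs; lra. }
  apply c_mult; [|apply continuous_const].
  apply c_plus; [apply c_plus; auto|]. apply continuous_Rabs_comp. apply c_minus; auto.
Qed.
Lemma c_min (f g : R -> R) x : continuous f x -> continuous g x -> continuous (fun t => Rmin (f t) (g t)) x.
Proof.
  intros Hf Hg.
  apply continuous_ext with (fun t => (f t + g t - Rabs (f t - g t)) * / 2).
  { intros t; unfold Rmin, Rabs; destruct Rle_dec; destruct Rcase_abs; lra. }
  apply c_mult; [|apply continuous_const].
  apply c_minus; [apply c_plus; auto|]. apply continuous_Rabs_comp. apply c_minus; auto.
Qed.

Definition pw (a : R) (g k : R -> R) (x : R) : R := if Rle_dec x a then g x else k x.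

Lemma pw_cont (a : R) (g k : R -> R) : (forall x, continuous g x) -> (forall x, continuous k x) -> g a = k a ->
  forall x, continuous (pw a g k) x.
Proof.
  intros Hg Hk E x.
  apply continuous_ext with (fun t => g (Rmin t a) + k (Rmax t a) - g a).
  { intros t; unfold pw, Rmin, Rmax; destruct Rle_dec; rewrite ?E; simpl; lra. }
  apply c_minus; [|apply continuous_const]. apply c_plus.
  - apply continuous_comp with (f := fun t => Rmin t a) (g := g); [|apply Hg].
    apply c_min; [apply continuous_id|apply continuous_const].
  - apply continuous_comp with (f := fun t => Rmax t a) (g := k); [|apply Hk].
    apply c_max; [apply continuous_id|apply continuous_const].
Qed.

Lemma int_piece (F f G : R -> R) a b : a <= b ->
  (forall x, a < x < b -> F x = f x) -> (forall x, is_derive G x (f x)) ->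
  (forall x, continuous f x) -> @eq R (RInt F a b) (G b - G a).
Proof.
  intros Hab HF HG Hc.
  rewrite (RInt_ext F f). 2:{ intros x; rewrite Rmin_left, Rmax_right; auto. }
  apply is_RInt_unique. apply (is_RInt_derive G f); auto.
Qed.

Lemma exc (f : R -> R) a b : (forall x, continuous f x) -> ex_RInt f a b.
Proof. intros H. apply (ex_RInt_continuous (V:=R_CompleteNormedModule)); auto. Qed.

Lemma exc2 (f : R -> R) a b : (forall x, continuous f x) -> @ex_RInt (CompleteNormedModule.NormedModule R_AbsRing R_CompleteNormedModule) f a b.
Proof. intros H. apply (ex_RInt_continuous (V:=R_CompleteNormedModule)); auto. Qed.

Lemma RInt_lin (f g : R -> R) c a b : (forall x, continuous f x) -> (forall x, continuous g x) ->
  RInt (fun t => f t + c * g t) a b = RInt f a b + c * RInt g a b.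
Proof.
  intros Hf Hg.
  transitivity (RInt (fun t => plus (f t) (scal c (g t))) a b).
  { apply RInt_ext; intros; reflexivity. }
  rewrite (RInt_plus (V:=R_CompleteNormedModule)).
  2: apply exc2; auto.
  2: apply exc2; intros x; apply (continuous_scal_r c g x); auto.
  rewrite (RInt_scal (V:=R_CompleteNormedModule)) by (apply exc2; auto).
  reflexivity.
Qed.

Lemma RInt_split_lt (f g : R -> R) a c e : a <= c -> c < e ->
  (forall x, continuous f x) -> (forall x, continuous g x) ->
  (forall x, a < x < c -> f x <= g x) -> (forall x, c < x < e -> f x < g x) ->
  RInt f a e < RInt g a e.
Proof.
  intros H1 H2 Hf Hg Hle Hlt.
  assert (E: forall h : R -> R, (forall x, continuous h x) -> RInt h a e = RInt h a c + RInt h c e).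
  { intros h Hh. symmetry. apply (RInt_Chasles (V:=R_CompleteNormedModule) h); apply exc2; auto. }
  rewrite (E f Hf), (E g Hg).
  apply Rplus_le_lt_compat.
  - apply RInt_le; auto; apply exc; auto.
  - apply RInt_lt; auto.
Qed.

Lemma RInt_split_lt2 (f g : R -> R) a c e : a < c -> c <= e ->
  (forall x, continuous f x) -> (forall x, continuous g x) ->
  (forall x, a < x < c -> f x < g x) -> (forall x, c < x < e -> f x <= g x) ->
  RInt f a e < RInt g a e.
Proof.
  intros H1 H2 Hf Hg Hlt Hle.
  assert (E: forall h : R -> R, (forall x, continuous h x) -> RInt h a e = RInt h a c + RInt h c e).
  { intros h Hh. symmetry. apply (RInt_Chasles (V:=R_CompleteNormedModule) h); apply exc2; auto. }
  rewrite (E f Hf), (E g Hg).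
  apply Rplus_lt_le_compat.
  - apply RInt_lt; auto.
  - apply RInt_le; auto; apply exc; auto.
Qed.

Definition good h b al th := 0 < h /\ 0 < b /\ 0 < al /\ al <= 1/2 /\ al <= 2 * rho h b /\
  al <= 2 * (1 - rho h b) /\ - al / 20 <= th <= al / 20.

Definition xsd h b al th := rho h b / 2 + (4 * rho h b - al) / (16 - 8 * al) + 1 / 8
            - (2 / al - 2) * th.

Lemma facts h b al th : good h b al th ->
  (0 < rho h b < 1 /\ h * rho h b = b * (1 - rho h b)) /\
  (l2 h b al th - l1 h b al th = rho h b / 2 /\ r2 h b al th - l2 h b al th = 1/4 /\
   r1 h b al th - r2 h b al th = (1 - rho h b) / 2) /\
  (0 < l1 h b al th /\ r1 h b al th < 1) /\
  (l2 h b al th < xsd h b al th < r2 h b al th) /\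
  (2 - al) * l1 h b al th + al * (xsd h b al th - l2 h b al th) = rho h b / 2.
Proof.
  intros [Hh [Hb [Ha [Ha1 [Ha2 [Ha3 [Ht1 Ht2]]]]]]].
  assert (Hr : rho h b * (h + b) = b) by (unfold rho; field; lra).
  assert (Hr0 : 0 < rho h b < 1) by (split; nra).
  assert (Ec : exists c, c = (4 * rho h b - al) / (16 - 8 * al)) by (eexists; reflexivity).
  destruct Ec as [c Ec].
  assert (Hc : c * (16 - 8 * al) = 4 * rho h b - al) by (rewrite Ec; field; lra).
  assert (Hc1 : al / 16 <= c) by nra.
  assert (Hc2 : c <= 1/4 - al / 16) by nra.
  assert (El1 : l1 h b al th = c + th) by (unfold l1; rewrite Ec; reflexivity).
  assert (Ek : exists k, k = 2 / al) by (eexists; reflexivity).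
  destruct Ek as [k Ek].
  assert (Hk : k * al = 2) by (rewrite Ek; field; lra).
  assert (Hk0 : 0 < k) by nra.
  assert (Exs : xsd h b al th = rho h b / 2 + c + 1/8 - (k - 2) * th)
    by (unfold xsd; rewrite Ec, Ek; reflexivity).
  assert (Hkt1 : k * th <= 1/10).
  { assert (k * th <= k * (al / 20)) by (apply Rmult_le_compat_l; lra). nra. }
  assert (Hkt2 : - (1/10) <= k * th).
  { assert (k * (- al / 20) <= k * th) by (apply Rmult_le_compat_l; lra). nra. }
  unfold r1, r2, l2 in *. rewrite Exs, El1.
  split; [split; [auto|nra]|].
  split; [repeat split; ring|].
  split; [split; lra|].
  split; [split; nra|].
  nra.
Qed.
Arguments facts {h b al th}.

Definition Bf h b al th x := al + (1 - al) * (cos (w1 h b * (x - l1 h b al th)) + 1).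
Definition Cf h b al th x := al + (1 - al) * (cos (w2 h b * (r1 h b al th - x)) + 1).
Definition densc h b al th :=
  pw (l1 h b al th) (fun _ => 2 - al)
   (pw (l2 h b al th) (Bf h b al th)
     (pw (r2 h b al th) (fun _ => al)
       (pw (r1 h b al th) (Cf h b al th) (fun _ => 2 - al)))).

Lemma w1_eq h b al th : good h b al th -> w1 h b * (l2 h b al th - l1 h b al th) = PI.
Proof.
  intros G. destruct (facts G) as [[Hr _] [[E1 _] _]]. rewrite E1. unfold w1. field. lra.
Qed.
Arguments w1_eq {h b al th}.
Lemma w2_eq h b al th : good h b al th -> w2 h b * (r1 h b al th - r2 h b al th) = PI.
Proof.
  intros G. destruct (facts G) as [[Hr _] [[_ [_ E1]] _]]. rewrite E1. unfold w2. field. lra.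
Qed.
Arguments w2_eq {h b al th}.

Lemma densc_cont h b al th : good h b al th -> forall x, continuous (densc h b al th) x.
Proof.
  intros G. pose proof (facts G) as [[Hr _] [[E1 [E2 E3]] _]].
  pose proof (w1_eq G) as W1. pose proof (w2_eq G) as W2.
  unfold densc. apply pw_cont; [intros; apply continuous_const| |].
  2:{ unfold pw, Bf. destruct Rle_dec; [|lra]. rewrite Rminus_diag, Rmult_0_r, cos_0. ring. }
  apply pw_cont.
  { intros x; apply (ex_derive_continuous (K:=R_AbsRing) (V:=R_NormedModule)); unfold Bf; auto_derive; auto. }
  2:{ unfold pw, Bf. destruct Rle_dec; [|lra]. rewrite W1, cos_PI. ring. }
  apply pw_cont; [intros; apply continuous_const| |].
  2:{ unfold pw, Cf. destruct Rle_dec; [|lra]. rewrite W2, cos_PI. ring. }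
  apply pw_cont; [| intros; apply continuous_const|].
  { intros x; apply (ex_derive_continuous (K:=R_AbsRing) (V:=R_NormedModule)); unfold Cf; auto_derive; auto. }
  unfold Cf. rewrite Rminus_diag, Rmult_0_r, cos_0. ring.
Qed.

Lemma densc_ge h b al th : good h b al th -> forall x, al <= densc h b al th x.
Proof.
  intros G x. pose proof G as [_ [_ [Ha [Ha1 _]]]].
  unfold densc, pw, Bf, Cf.
  destruct Rle_dec; [lra|]. destruct Rle_dec.
  { pose proof (COS_bound (w1 h b * (x - l1 h b al th))). nra. }
  destruct Rle_dec; [lra|]. destruct Rle_dec; [|lra].
  pose proof (COS_bound (w2 h b * (r1 h b al th - x))). nra.
Qed.

Lemma dens_eq h b al th x : 0 <= x <= 1 -> dens h b al th x = densc h b al th x.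
Proof.
  intros Hx. unfold dens, densc, pw.
  destruct (Rlt_dec x 0); [lra|]. destruct (Rlt_dec 1 x); [lra|]. reflexivity.
Qed.
Ltac toR := match goal with |- ?a = ?b => change (@eq R a b) end; change RinvImpl.Rinv with Rinv; unfold Rminus.

Lemma chasles3 (F : R -> R) a b c d : (forall x, continuous F x) ->
  RInt F a d = RInt F a b + RInt F b c + RInt F c d.
Proof.
  intros H.
  assert (H1 : RInt F a b + RInt F b d = RInt F a d)
    by (exact (RInt_Chasles (V:=R_CompleteNormedModule) F a b d (exc2 F a b H) (exc2 F b d H))).
  assert (H2 : RInt F b c + RInt F c d = RInt F b d)
    by (exact (RInt_Chasles (V:=R_CompleteNormedModule) F b c d (exc2 F b c H) (exc2 F c d H))).
  lra.
Qed.

Lemma w1_pos h b : 0 < rho h b -> 0 < w1 h b.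
Proof. intros. unfold w1. pose proof PI_RGT_0. apply Rdiv_lt_0_compat; lra. Qed.
Lemma w2_pos h b : rho h b < 1 -> 0 < w2 h b.
Proof. intros. unfold w2. pose proof PI_RGT_0. apply Rdiv_lt_0_compat; lra. Qed.

Lemma piece_const h b al th a c v : a <= c ->
  (forall x, a < x < c -> densc h b al th x = v) -> @eq R (RInt (densc h b al th) a c) (v * (c - a)).
Proof.
  intros Hac HF.
  rewrite (int_piece (densc h b al th) (fun _ => v) (fun t => v * t) a c); auto. 
  - ring.
  - intros x. auto_derive; auto. ring.
  - intros; apply continuous_const.
Qed.

Lemma piece_B h b al th : good h b al th ->
  @eq R (RInt (densc h b al th) (l1 h b al th) (l2 h b al th)) (rho h b / 2).
Proof.
  intros G. pose proof (facts G) as [[Hr _] [[E1 [E2 E3]] _]].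
  pose proof (w1_eq G) as W1. pose proof (w1_pos h b (proj1 Hr)) as Hw.
  rewrite (int_piece (densc h b al th) (Bf h b al th)
    (fun t => al * t + (1 - al) * (sin (w1 h b * (t - l1 h b al th)) / w1 h b + t))).
  - rewrite W1, Rminus_diag, Rmult_0_r, sin_PI, sin_0. rewrite <- E1. field. lra.
  - lra.
  - intros x Hx. unfold densc, pw. destruct Rle_dec; [lra|]. destruct Rle_dec; [reflexivity|lra].
  - intros x. unfold Bf. auto_derive; auto. toR. field. lra.
  - intros x; apply (ex_derive_continuous (K:=R_AbsRing) (V:=R_NormedModule)); unfold Bf; auto_derive; auto.
Qed.

Lemma piece_C h b al th : good h b al th ->
  @eq R (RInt (densc h b al th) (r2 h b al th) (r1 h b al th)) ((1 - rho h b) / 2).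
Proof.
  intros G. pose proof (facts G) as [[Hr _] [[E1 [E2 E3]] _]].
  pose proof (w2_eq G) as W2. pose proof (w2_pos h b (proj2 Hr)) as Hw.
  rewrite (int_piece (densc h b al th) (Cf h b al th)
    (fun t => al * t + (1 - al) * (- sin (w2 h b * (r1 h b al th - t)) / w2 h b + t))).
  - rewrite W2, Rminus_diag, Rmult_0_r, sin_PI, sin_0. rewrite <- E3. field. lra.
  - lra.
  - intros x Hx. unfold densc, pw. destruct Rle_dec; [lra|]. destruct Rle_dec; [lra|].
    destruct Rle_dec; [lra|]. destruct Rle_dec; [reflexivity|lra].
  - intros x. unfold Cf. auto_derive; auto. toR. field. lra.
  - intros x; apply (ex_derive_continuous (K:=R_AbsRing) (V:=R_NormedModule)); unfold Cf; auto_derive; auto.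
Qed.

Lemma I_left h b al th : good h b al th -> @eq R (RInt (densc h b al th) 0 (xsd h b al th)) (rho h b).
Proof.
  intros G. pose proof (facts G) as [[Hr _] [[E1 [E2 E3]] [[P1 P2] [[X1 X2] K]]]].
  rewrite (chasles3 _ 0 (l1 h b al th) (l2 h b al th)) by (apply densc_cont; auto).
  rewrite piece_B by auto.
  rewrite (piece_const h b al th 0 (l1 h b al th) (2 - al)).
  2: lra.
  2:{ intros x Hx. unfold densc, pw. destruct Rle_dec; [reflexivity|lra]. }
  rewrite (piece_const h b al th (l2 h b al th) (xsd h b al th) al).
  2: lra.
  2:{ intros x Hx. unfold densc, pw. destruct Rle_dec; [lra|]. destruct Rle_dec; [lra|].
      destruct Rle_dec; [reflexivity|lra]. }
  lra.
Qed.

Lemma I_right h b al th : good h b al th -> @eq R (RInt (densc h b al th) (xsd h b al th) 1) (1 - rho h b).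
Proof.
  intros G. pose proof (facts G) as [[Hr _] [[E1 [E2 E3]] [[P1 P2] [[X1 X2] K]]]].
  rewrite (chasles3 _ (xsd h b al th) (r2 h b al th) (r1 h b al th)) by (apply densc_cont; auto).
  rewrite piece_C by auto.
  rewrite (piece_const h b al th (xsd h b al th) (r2 h b al th) al).
  2: lra.
  2:{ intros x Hx. unfold densc, pw. destruct Rle_dec; [lra|]. destruct Rle_dec; [lra|].
      destruct Rle_dec; [reflexivity|lra]. }
  rewrite (piece_const h b al th (r1 h b al th) 1 (2 - al)).
  2: lra.
  2:{ intros x Hx. unfold densc, pw. destruct Rle_dec; [lra|]. destruct Rle_dec; [lra|].
      destruct Rle_dec; [lra|]. destruct Rle_dec; [lra|reflexivity]. }
  assert (Er2 : r2 h b al th = l2 h b al th + 1/4) by lra.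
  assert (Er1 : r1 h b al th = l1 h b al th + 3/4) by lra.
  rewrite Er2, Er1. nra.
Qed.

Definition Phi h b al th y t := densc h b al th t * (h * Rmax (y - t) 0 + b * Rmax (t - y) 0).

Lemma Phi_cont h b al th y : good h b al th -> forall x, continuous (Phi h b al th y) x.
Proof.
  intros G x. unfold Phi. apply c_mult; [apply densc_cont; auto|].
  apply c_plus; apply c_mult; try apply continuous_const; apply c_max; try apply continuous_const;
  apply c_minus; try apply continuous_const; apply continuous_id.
Qed.

Lemma cost_eq h b al th y : good h b al th ->
  @eq R (cost h b al th y) (RInt (Phi h b al th y) 0 (xsd h b al th) + RInt (Phi h b al th y) (xsd h b al th) 1).
Proof.
  intros G. pose proof (facts G) as [[Hr _] [[E1 [E2 E3]] [[P1 P2] [[X1 X2] K]]]].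
  unfold cost.
  assert (HE : @eq R (RInt (fun t => dens h b al th t * (h * Rmax (y - t) 0 + b * Rmax (t - y) 0)) 0 1)
     (RInt (Phi h b al th y) 0 1)).
  { apply RInt_ext. rewrite Rmin_left, Rmax_right by lra. intros x Hx.
    unfold Phi. rewrite dens_eq by lra. reflexivity. }
  rewrite HE.
  pose proof (Phi_cont h b al th y G) as C.
  assert (H1 : RInt (Phi h b al th y) 0 (xsd h b al th) + RInt (Phi h b al th y) (xsd h b al th) 1
     = RInt (Phi h b al th y) 0 1)
    by (exact (RInt_Chasles (V:=R_CompleteNormedModule) _ _ _ _ (exc2 _ _ _ C) (exc2 _ _ _ C))).
  lra.
Qed.

Lemma pA h b d X y t : 0 < d -> 0 < h -> 0 < b -> t < X ->
  d * (h * Rmax (X - t) 0 + b * Rmax (t - X) 0) + h * (y - X) * d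
   <= d * (h * Rmax (y - t) 0 + b * Rmax (t - y) 0)
  /\ (y < t -> d * (h * Rmax (X - t) 0 + b * Rmax (t - X) 0) + h * (y - X) * d
   < d * (h * Rmax (y - t) 0 + b * Rmax (t - y) 0)).
Proof.
  intros Hd Hh Hb Ht.
  unfold Rmax. destruct (Rle_dec (X - t) 0); [lra|]. destruct (Rle_dec (t - X) 0); [|lra].
  assert (0 < d * h) by nra. assert (0 < d * b) by nra.
  destruct (Rle_dec (y - t) 0); destruct (Rle_dec (t - y) 0); split; intros; idtac "c"; nra.
Qed.

Lemma pB h b d X y t : 0 < d -> 0 < h -> 0 < b -> X < t ->
  d * (h * Rmax (X - t) 0 + b * Rmax (t - X) 0) + - (b * (y - X)) * d
   <= d * (h * Rmax (y - t) 0 + b * Rmax (t - y) 0)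
  /\ (t < y -> d * (h * Rmax (X - t) 0 + b * Rmax (t - X) 0) + - (b * (y - X)) * d
   < d * (h * Rmax (y - t) 0 + b * Rmax (t - y) 0)).
Proof.
  intros Hd Hh Hb Ht.
  unfold Rmax. destruct (Rle_dec (X - t) 0); [|lra]. destruct (Rle_dec (t - X) 0); [lra|].
  assert (0 < d * h) by nra. assert (0 < d * b) by nra.
  destruct (Rle_dec (y - t) 0); destruct (Rle_dec (t - y) 0); split; intros; idtac "c"; nra.
Qed.

Lemma strict h b al th y : good h b al th -> y <> xsd h b al th ->
  cost h b al th (xsd h b al th) < cost h b al th y.
Proof.
  intros G Hy. pose proof (facts G) as [[Hr Hhb] [[E1 [E2 E3]] [[P1 P2] [[X1 X2] K]]]].
  pose proof G as [Hh [Hb [Ha _]]].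
  set (X := xsd h b al th) in *.
  rewrite (cost_eq h b al th y G), (cost_eq h b al th X G). fold X.
  pose proof (densc_cont h b al th G) as DC. pose proof (densc_ge h b al th G) as DG.
  pose proof (Phi_cont h b al th X G) as CX. pose proof (Phi_cont h b al th y G) as CY.
  assert (LA : RInt (fun t => Phi h b al th X t + h * (y - X) * densc h b al th t) 0 X
     = RInt (Phi h b al th X) 0 X + h * (y - X) * rho h b).
  { rewrite RInt_lin by auto. rewrite I_left by auto. reflexivity. }
  assert (LB : RInt (fun t => Phi h b al th X t + - (b * (y - X)) * densc h b al th t) X 1
     = RInt (Phi h b al th X) X 1 + - (b * (y - X)) * (1 - rho h b)).
  { rewrite RInt_lin by auto. rewrite I_right by auto. reflexivity. }
  assert (Z : h * (y - X) * rho h b + - (b * (y - X)) * (1 - rho h b) = 0).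
  { transitivity ((y - X) * (h * rho h b - b * (1 - rho h b))); [ring|]. rewrite Hhb. ring. }
  assert (CA : forall x, continuous (fun t => Phi h b al th X t + h * (y - X) * densc h b al th t) x).
  { intros x. apply c_plus; auto. apply c_mult; auto. apply continuous_const. }
  assert (CB : forall x, continuous (fun t => Phi h b al th X t + - (b * (y - X)) * densc h b al th t) x).
  { intros x. apply c_plus; auto. apply c_mult; auto. apply continuous_const. }
  destruct (Rlt_or_le y X) as [Hlt | Hle].
  - assert (HM : Rmax y 0 < X) by (apply Rmax_lub_lt; lra).
    assert (SA : RInt (fun t => Phi h b al th X t + h * (y - X) * densc h b al th t) 0 X
                 < RInt (Phi h b al th y) 0 X).
    { apply (RInt_split_lt _ _ 0 (Rmax y 0) X).
      - apply Rmax_r.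
      - exact HM.
      - exact CA.
      - exact CY.
      - intros t Ht. unfold Phi.
        pose proof (DG t).
        refine (proj1 (pA h b (densc h b al th t) X y t _ Hh Hb _)); lra.
      - intros t Ht. unfold Phi.
        pose proof (DG t). pose proof (Rmax_l y 0).
        refine (proj2 (pA h b (densc h b al th t) X y t _ Hh Hb _) _); lra. }
    assert (SB : RInt (fun t => Phi h b al th X t + - (b * (y - X)) * densc h b al th t) X 1
                 <= RInt (Phi h b al th y) X 1).
    { apply RInt_le; try lra; try (apply exc; auto).
      intros t Ht. unfold Phi. pose proof (DG t).
      refine (proj1 (pB h b (densc h b al th t) X y t _ Hh Hb _)); lra. }
    rewrite LA in SA. rewrite LB in SB. lra.
  - assert (Hlt : X < y) by (destruct Hle; [auto| congruence]).
    assert (HM : X < Rmin y 1) by (apply Rmin_glb_lt; lra).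
    assert (SA : RInt (fun t => Phi h b al th X t + h * (y - X) * densc h b al th t) 0 X
                 <= RInt (Phi h b al th y) 0 X).
    { apply RInt_le; try lra; try (apply exc; auto).
      intros t Ht. unfold Phi. pose proof (DG t).
      refine (proj1 (pA h b (densc h b al th t) X y t _ Hh Hb _)); lra. }
    assert (SB : RInt (fun t => Phi h b al th X t + - (b * (y - X)) * densc h b al th t) X 1
                 < RInt (Phi h b al th y) X 1).
    { apply (RInt_split_lt2 _ _ X (Rmin y 1) 1).
      - exact HM.
      - apply Rmin_r.
      - exact CB.
      - exact CY.
      - intros t Ht. unfold Phi.
        pose proof (DG t). pose proof (Rmin_l y 1).
        refine (proj2 (pB h b (densc h b al th t) X y t _ Hh Hb _) _); lra.
      - intros t Ht. unfold Phi. pose proof (DG t).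
        refine (proj1 (pB h b (densc h b al th t) X y t _ Hh Hb _)); lra. }
    lra.
Qed.

Theorem lemma3 (h b alpha theta : R) :
  0 < h -> 0 < b ->
  0 < alpha ->
  alpha <= Rmin (1 / 2) (Rmin (2 * rho h b) (2 * (1 - rho h b))) ->
  - alpha / 20 <= theta <= alpha / 20 ->
  let xs := rho h b / 2 + (4 * rho h b - alpha) / (16 - 8 * alpha) + 1 / 8
            - (2 / alpha - 2) * theta in
  l2 h b alpha theta <= xs <= r2 h b alpha theta /\
  (forall y, cost h b alpha theta xs <= cost h b alpha theta y) /\
  (forall y, cost h b alpha theta y <= cost h b alpha theta xs -> y = xs).
Proof.
  intros Hh Hb Ha Hal Hth xs.
  assert (G : good h b alpha theta).
  { pose proof (Rmin_l (1/2) (Rmin (2 * rho h b) (2 * (1 - rho h b)))).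
    pose proof (Rmin_r (1/2) (Rmin (2 * rho h b) (2 * (1 - rho h b)))).
    pose proof (Rmin_l (2 * rho h b) (2 * (1 - rho h b))).
    pose proof (Rmin_r (2 * rho h b) (2 * (1 - rho h b))).
    unfold good; repeat split; lra. }
  change xs with (xsd h b alpha theta).
  pose proof (facts G) as [_ [_ [_ [[X1 X2] _]]]].
  split; [lra|]. split.
  - intros y. destruct (Req_dec y (xsd h b alpha theta)) as [->|Hne]; [lra|].
    apply Rlt_le, strict; auto.
  - intros y Hy. destruct (Req_dec y (xsd h b alpha theta)) as [|Hne]; auto.
    exfalso. pose proof (strict h b alpha theta y G Hne). lra.
Qed.
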